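(* Consider unbounded homogeneous systems with error specifications, and for $k\in\mathbb{N}_{>0}$ the Horn constraints (H0)–(H4) described in the context. (1) If, for a given system and error specification, the constraints (H0)–(H4) are solvable for some $k$, then they are also solvable for every $k'>k$ (for the same system and error specification). (2) If $k'>k>0$, then there exist a system and error specification for which the constraints (H0)–(H4) are solvable for $k'$ but not solvable for $k$.
   Context: An unbounded homogeneous system consists of a non-empty global state space $G$, the process index set $P=\mathbb{N}$, a non-empty local state space $L$ (the same for all processes), a set of initial states $\mathit{Init}\subseteq G\times L$ (the same for all processes), and, for each process id $p\in\mathbb{N}$, a transition relation $(g,l)\stackrel{p}{\to}(g',l')$ on $G\times L$ (the behaviour may depend on the id $p$). System states are pairs $(g,\bar l)$ with $\bar l\in L^{\mathbb{N}}$; initial states are those with $(g,\bar l[p])\in\mathit{Init}$ for all $p$; the system transitions are $(g,\bar l)\to(g',\bar l[p/l'])$ whenever $(g,\bar l[p])\stackrel{p}{\to}(g',l')$, where $\bar l[p/l']$ replaces component $p$ by $l'$. An error specification is $(\langle p_1,E_1\rangle,\dots,\langle p_m,E_m\rangle)$ with pairwise distinct $p_j\in\mathbb{N}$ and $E_j\subseteq G\times L$; error states are $(g,\bar l)$ with $(g,\bar l[p_j])\in E_j$ for all $j$. For $k\ge 1$, the constraints are on a single relation $R\subseteq G\times(\mathbb{N}\times L)^k$; $\mathit{dist}(x_1,\dots,x_r)$ means the $x_i$ are pairwise distinct; for indices $a\le b$, $\mathit{RConj}(a,\dots,b)$ denotes $\bigwedge_{i_1<\dots<i_k,\ i_j\in\{a,\dots,b\}}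 R(g,q_{i_1},l_{i_1},\dots,q_{i_k},l_{i_k})$. All variables $g,g',q_i\in\mathbb{N},l_i,l_i'\in L$ are universally quantified: (H0) for every permutation $\sigma$ of $\{1,\dots,k\}$: $\mathit{dist}(q_1,\dots,q_k)\wedge R(g,q_1,l_1,\dots,q_k,l_k)\Rightarrow R(g,q_{\sigma(1)},l_{\sigma(1)},\dots,q_{\sigma(k)},l_{\sigma(k)})$; (H1) $\mathit{dist}(q_1,\dots,q_k)\wedge\mathit{Init}(g,l_1)\wedge\dots\wedge\mathit{Init}(g,l_k)\Rightarrow R(g,q_1,l_1,\dots,q_k,l_k)$; (H2) $\mathit{dist}(q_1,\dots,q_k)\wedge (g,l_1)\stackrel{q_1}{\to}(g',l_1')\wedge R(g,q_1,l_1,\dots,q_k,l_k)\Rightarrow R(g',q_1,l_1',q_2,l_2,\dots,q_k,l_k)$; (H3) $\mathit{dist}(q_0,q_1,\dots,q_k)\wedge (g,l_0)\stackrel{q_0}{\to}(g',l_0')\wedge\mathit{RConj}(0,\dots,k)\Rightarrow R(g',q_1,l_1,\dots,q_k,l_k)$; (H4) with $r=\max\{m,k\}$: $\mathit{dist}(q_1,\dots,q_r)\wedge\bigwedge_{j=1}^m\big(q_j=p_j\wedge(g,l_j)\in E_j\big)\wedge\mathit{RConj}(1,\dots,r)\Rightarrow\mathit{false}$. The constraints are solvable for $k$ if some relation $R$ makes all of (H0)–(H4) true. *)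

(* Defs.v *)
From mathcomp Require Import all_boot all_fingroup.
Set Implicit Arguments. Unset Strict Implicit. Unset Printing Implicit Defensive.

(* An unbounded homogeneous system: global states G, local states L (both
   non-empty), initial states Init ⊆ G × L, and for each process id p a
   transition relation (g,l) -p-> (g',l'), given as [trans p g l g' l']. *)
Record system := System {
  Gs : Type;
  Ls : Type;
  Gs_ne : inhabited Gs;
  Ls_ne : inhabited Ls;
  Init : Gs -> Ls -> Prop;
  trans : nat -> Gs -> Ls -> Gs -> Ls -> Prop
}.

(* An error specification (<p_1,E_1>,...,<p_m,E_m>) with pairwise distinct
   p_j; the index j ranges over 'I_m (0-based). *)
Record errspec (S : system) := ErrSpec {
  em : nat;
  ep : 'I_em -> nat;
  eE : 'I_em -> Gs S -> Ls S -> Prop;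
  ep_inj : injective ep
}.

(* A k-tuple (q_1,l_1,...,q_k,l_k) ∈ (N × L)^k is a function 'I_k -> nat * L. *)
Definition dist {n : nat} {L : Type} (x : 'I_n -> nat * L) : Prop :=
  injective (fun i => (x i).1).

Definition incr {k r : nat} (f : 'I_k -> 'I_r) : Prop :=
  forall i j : 'I_k, i < j -> f i < f j.

Definition RConj {G L : Type} {k r : nat}
  (R : G -> ('I_k -> nat * L) -> Prop) (g : G) (y : 'I_r -> nat * L) : Prop :=
  forall f : 'I_k -> 'I_r, incr f -> R g (fun j => y (f j)).

Section Constraints.
Variables (S : system) (E : errspec S) (k : nat).
Variable R : Gs S -> ('I_k -> nat * Ls S) -> Prop.

Definition H0 : Prop :=
  forall (g : Gs S) (x : 'I_k -> nat * Ls S) (s : 'S_k),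
    dist x -> R g x -> R g (fun j => x (s j)).

Definition H1 : Prop :=
  forall (g : Gs S) (x : 'I_k -> nat * Ls S),
    dist x -> (forall j, @Init S g (x j).2) -> R g x.

(* the first component (index 0, i.e. q_1) takes the step *)
Definition H2 : Prop :=
  forall (g g' : Gs S) (x : 'I_k -> nat * Ls S) (i0 : 'I_k) (l1' : Ls S),
    nat_of_ord i0 = 0 -> dist x ->
    @trans S (x i0).1 g (x i0).2 g' l1' -> R g x ->
    R g' (fun j => if j == i0 then ((x i0).1, l1') else x j).

(* variables q_0..q_k indexed by 'I_k.+1; q_0 takes the step *)
Definition H3 : Prop :=
  forall (g g' : Gs S) (y : 'I_k.+1 -> nat * Ls S) (l0' : Ls S),
    dist y -> @trans S (y ord0).1 g (y ord0).2 g' l0' -> RConj R g y ->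
    R g' (fun j => y (lift ord0 j)).

Definition H4 : Prop :=
  forall (g : Gs S) (y : 'I_(maxn (em E) k) -> nat * Ls S),
    dist y ->
    (forall j : 'I_(em E),
        (y (widen_ord (leq_maxl (em E) k) j)).1 = @ep S E j /\
        @eE S E j g (y (widen_ord (leq_maxl (em E) k) j)).2) ->
    RConj R g y -> False.

End Constraints.

Definition solvable (S : system) (E : errspec S) (k : nat) : Prop :=
  exists R : Gs S -> ('I_k -> nat * Ls S) -> Prop,
    H0 R /\ H1 R /\ H2 R /\ H3 R /\ H4 E R.

(* Main.v *)
Require Import Defs.
From mathcomp Require Import all_boot all_fingroup.
From mathcomp Require Import all_order zify.
From Stdlib Require Import FunctionalExtensionality.
Set Implicit Arguments. Unset Strict Implicit. Unset Printing Implicit Defensive.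
Import Order.TTheory.

Lemma ext_set n (A0 : {set 'I_n}) j : #|A0| <= j <= n ->
  exists A : {set 'I_n}, A0 \subset A /\ #|A| = j.
Proof.
elim: j => [|j IH].
  rewrite leqn0 => /andP[/eqP H _]; exists A0; split => //.
move=> /andP[H1 H2].
case: (ltngtP #|A0| j.+1) H1 => // [Hlt|Heq] _; last by exists A0.
have [A [sA cA]] : exists A : {set 'I_n}, A0 \subset A /\ #|A| = j.
  by apply: IH; rewrite -ltnS Hlt ltnW.
have : 0 < #|~: A| by rewrite cardsCs setCK card_ord cA subn_gt0.
case/card_gt0P => x; rewrite in_setC => xA.
exists (x |: A); split; first by apply: subset_trans sA (subsetUr _ _).
by rewrite cardsU1 xA cA.
Qed.

Lemma factor k k' n (e : 'I_k -> 'I_n) : injective e -> k <= k' -> k' <= n ->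
  exists F : 'I_k' -> 'I_n, (forall i j : 'I_k', i < j -> F i < F j) /\
  exists f : 'I_k -> 'I_k', injective f /\ forall i, e i = F (f i).
Proof.
move=> ie hk hk'.
have cA0 : #|e @: [set: 'I_k]| = k by rewrite card_imset // cardsT card_ord.
have [A [sA cA]] : exists A : {set 'I_n}, e @: [set: 'I_k] \subset A /\ #|A| = k'.
  by apply: ext_set; rewrite cA0 hk hk'.
pose F (i : 'I_k') : 'I_n := Order.enum_val (cast_ord (esym cA) i).
have inA : forall i, e i \in A.
  by move=> i; apply: (subsetP sA); apply: imset_f; rewrite inE.
pose f (i : 'I_k) : 'I_k' := cast_ord cA (Order.enum_rank_in (inA i) (e i)).
have eF : forall i, e i = F (f i).
  move=> i; rewrite /F /f cast_ordK Order.enum_rankK_in //.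
exists F; split.
  move=> i j lij.
  have := (leW_mono (@Order.le_enum_val _ 'I_n (@le_total _ 'I_n) (mem A))).
  move=> /(_ (cast_ord (esym cA) i) (cast_ord (esym cA) j)).
  rewrite /F !ltEord /= => ->; exact: lij.
exists f; split => // i j /(congr1 F); rewrite -!eF; exact: ie.
Qed.

Lemma incr_inj k r (f : 'I_k -> 'I_r) : incr f -> injective f.
Proof.
move=> hf i j eij; case: (ltngtP i j) => [h|h|/val_inj //].
  by have := hf _ _ h; rewrite eij ltnn.
by have := hf _ _ h; rewrite eij ltnn.
Qed.

Lemma dist_comp n m L (x : 'I_n -> nat * L) (f : 'I_m -> 'I_n) :
  dist x -> injective f -> dist (fun j => x (f j)).
Proof. by move=> dx jf a b /dx /jf. Qed.

Definition hmap n m (a : 'I_m) (f : 'I_n -> 'I_m) (i : 'I_n.+1) : 'I_m :=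
  match unlift ord0 i with Some j => f j | None => a end.

Lemma hmap0 n m (a : 'I_m) (f : 'I_n -> 'I_m) : hmap a f ord0 = a.
Proof. by rewrite /hmap unlift_none. Qed.

Lemma hmapS n m (a : 'I_m) (f : 'I_n -> 'I_m) j : hmap a f (lift ord0 j) = f j.
Proof. by rewrite /hmap liftK. Qed.

Lemma hmap_inj n m (a : 'I_m) (f : 'I_n -> 'I_m) :
  injective f -> (forall j, f j != a) -> injective (hmap a f).
Proof.
move=> jf na i1 i2.
case: (unliftP ord0 i1) => [j1 ->|->]; case: (unliftP ord0 i2) => [j2 ->|->];
  rewrite ?hmapS ?hmap0 //.
- by move/jf => ->.
- by move=> h; have := na j1; rewrite h eqxx.
- by move=> h; have := na j2; rewrite h eqxx.
Qed.

Lemma widen_inj n m (H : n <= m) : injective (widen_ord H).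
Proof. by move=> a b /(congr1 val) /= /val_inj. Qed.

Section Up.
Variables (S : system) (E : errspec S) (k k' : nat).
Hypotheses (hk0 : 0 < k) (hkk : k <= k').
Variable R : Gs S -> ('I_k -> nat * Ls S) -> Prop.
Hypotheses (R0 : H0 R) (R1 : H1 R) (R2 : H2 R) (R3 : H3 R) (R4 : H4 E R).

Definition R' (g : Gs S) (x : 'I_k' -> nat * Ls S) : Prop :=
  forall f : 'I_k -> 'I_k', injective f -> R g (fun j => x (f j)).

Lemma R'0 : H0 R'.
Proof.
move=> g x s dx Rx f jf.
exact: (Rx (fun j => s (f j)) (inj_comp (@perm_inj _ s) jf)).
Qed.

Lemma R'1 : H1 R'.
Proof. move=> g x dx hI f jf; apply: R1 => //; exact: dist_comp. Qed.

Lemma R'2 : H2 R'.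
Proof.
move=> g g' x i0 l1' Hi0 dx Htr Rx f jf /=.
case: (pickP (fun j0 => f j0 == i0)) => [j0 /eqP fj0|nf].
- pose z : 'I_k := Ordinal hk0.
  pose s := tperm j0 z.
  have H : R g' (fun j => (fun a => if a == i0 then ((x i0).1, l1') else x a) (f (s j))).
    have := R2 (g := g) (x := fun j => x (f (s j))) (i0 := z) (l1' := l1') (g' := g') (erefl _)
      (dist_comp (dist_comp dx jf) (@perm_inj _ s)).
    rewrite /s tpermR fj0 => /(_ Htr (Rx _ (inj_comp jf (@perm_inj _ _)))).
    congr R; apply: functional_extensionality => j /=.
    rewrite -fj0 (inj_eq jf).
    have -> : (tperm j0 z j == j0) = (j == z).
      by apply/eqP/eqP => [h|->]; [rewrite -(tpermK j0 z j) h tpermL | rewrite tpermR].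
    by [].
  have dx' : dist (fun a => if a == i0 then ((x i0).1, l1') else x a).
    move=> a b /=; case: (a == i0) /eqP => [->|_]; case: (b == i0) /eqP => [->|_] //=;
      by move/dx.
  have := @R0 g' _ s (dist_comp (dist_comp dx' jf) (@perm_inj _ s)) H.
  congr R; apply: functional_extensionality => j /=.
  by rewrite /s tpermK.
- have nf' : forall j, f j != i0 by move=> j; rewrite nf.
  pose h := hmap i0 f.
  have jh : injective h by apply: hmap_inj.
  have := R3 (g := g) (g' := g') (y := fun i => x (h i)) (l0' := l1') (dist_comp dx jh).
  rewrite /h hmap0 => /(_ Htr).
  have RC : RConj R g (fun i => x (hmap i0 f i)).
    by move=> e ie; apply: Rx; apply: inj_comp jh (incr_inj ie).
  move=> /(_ RC); congr R; apply: functional_extensionality => j /=.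
  by rewrite hmapS (negbTE (nf' j)).
Qed.

Lemma R'3 : H3 R'.
Proof.
move=> g g' y l0' dy Htr RC f jf /=.
pose h := hmap ord0 (fun j => lift ord0 (f j)).
have jh : injective h.
  apply: hmap_inj; first by apply: inj_comp jf; apply: lift_inj.
  by move=> j; rewrite eq_sym neq_lift.
have := R3 (g := g) (g' := g') (y := fun i => y (h i)) (l0' := l0') (dist_comp dy jh).
rewrite /h hmap0 => /(_ Htr).
have RC2 : RConj R g (fun i => y (h i)).
  move=> e ie.
  have [F [iF [f2 [jf2 eF]]]] := factor (inj_comp jh (incr_inj ie)) hkk (leqnSn k').
  have := RC F iF f2 jf2; congr R; apply: functional_extensionality => j /=.
  by rewrite -eF.
move=> /(_ RC2); congr R; apply: functional_extensionality => j /=.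
by rewrite /h hmapS.
Qed.

Lemma R'4 : H4 E R'.
Proof.
move=> g y dy Herr RC.
have Hr : maxn (em E) k <= maxn (em E) k'.
  by rewrite geq_max leq_maxl /= (leq_trans hkk (leq_maxr _ _)).
apply: (R4 (y := fun i => y (widen_ord Hr i))).
- apply: dist_comp dy _; exact: widen_inj.
- move=> j; have := Herr j.
  have -> : widen_ord Hr (widen_ord (leq_maxl (em E) k) j) =
            widen_ord (leq_maxl (em E) k') j by apply: ord_inj.
  done.
- move=> e ie.
  have [F [iF [f2 [jf2 eF]]]] :=
    factor (inj_comp (@widen_inj _ _ Hr) (incr_inj ie)) hkk (leq_maxr (em E) k').
  have := RC F iF f2 jf2; congr R; apply: functional_extensionality => j /=.
  by rewrite -eF.
Qed.

End Up.

Lemma part1 (S : system) (E : errspec S) (k k' : nat) :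
  0 < k -> k <= k' -> solvable E k -> solvable E k'.
Proof.
move=> hk0 hkk [R [R0 [R1 [R2 [R3 R4]]]]].
exists (@R' S k k' R); split; first exact: R'0.
split; first by apply: R'1.
split; first by apply: R'2.
split; first by apply: R'3.
by apply: R'4.
Qed.

Definition sysK (K : nat) : system :=
  @System nat bool (inhabits 0) (inhabits false)
    (fun g l => g = 0 /\ l = false)
    (fun p g l g' l' => l = false /\ l' = true /\ g < K /\ g' = g.+1).

Definition errK (K : nat) : errspec (sysK K) :=
  @ErrSpec (sysK K) K.+1 (fun j => val j) (fun j g l => l = true) val_inj.

Definition cnt n (x : 'I_n -> nat * bool) : nat := \sum_(i < n) (x i).2.

Lemma cnt_perm n (x : 'I_n -> nat * bool) (s : 'S_n) : cnt (fun j => x (s j)) = cnt x.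
Proof. by rewrite /cnt [RHS](reindex_inj (@perm_inj _ s)). Qed.

Lemma cnt_ge n (x : 'I_n -> nat * bool) i : (x i).2 <= cnt x.
Proof. by rewrite /cnt (bigD1 i) //= leq_addr. Qed.

Lemma cnt_upd n (x : 'I_n -> nat * bool) i b :
  cnt (fun j => if j == i then ((x i).1, b) else x j) + (x i).2 = cnt x + b.
Proof.
rewrite /cnt (bigD1 i) //= [in RHS](bigD1 i) //= eqxx /=.
rewrite (eq_bigr (fun j => nat_of_bool (x j).2)); last first.
  by move=> j /negbTE ->.
by lia.
Qed.

Lemma pos_solv K : solvable (errK K) K.+1.
Proof.
exists (fun (g : nat) (x : 'I_K.+1 -> nat * bool) => g <= K /\ cnt x <= g).
split; last split; last split; last split.
- by move=> g x s dx [h1 h2]; rewrite cnt_perm.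
- move=> g x dx hI; have [-> _] := hI ord0; split => //.
  rewrite /cnt big1 // => i _; by have [_ ->] := hI i.
- move=> g g' x i0 l1' _ dx [h1 [-> [h3 ->]]] [_ h5]; split => //.
  have := cnt_upd x i0 true; rewrite h1 addn0 => ->.
  by rewrite addn1 ltnS.
- move=> g g' y l0' dy [_ [_ [h3 ->]]] RC; split => //.
  have := RC (lift ord0); case.
    by move=> i j; rewrite /= /bump /= !add1n ltnS.
  move=> _ h; apply: leqW; exact: h.
- move=> g y dy Herr RC.
  have := RC (widen_ord (leq_maxl K.+1 K.+1)); case; first by [].
  move=> hgK hc.
  have : K.+1 <= g.
    apply: leq_trans hc.
    rewrite /cnt (eq_bigr (fun => 1)); last by move=> i _; have [_ /= ->] := Herr i.
    by rewrite sum1_card card_ord.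
  by rewrite ltnNge hgK.
Qed.

Lemma neg_solv K : 0 < K -> ~ solvable (errK K) K.
Proof.
move=> hK [R [R0 [R1 [R2 [R3 R4]]]]].
pose z : 'I_K := Ordinal hK.
have claim : forall j, j <= K -> forall x : 'I_K -> nat * bool,
    dist x -> cnt x = j -> R j x.
  elim=> [|j IH] hj x dx cx.
    apply: R1 => // i; split => //.
    by have := cnt_ge x i; rewrite cx leqn0 => /eqP; case: (x i).2.
  case: (pickP (fun i => (x i).2)) => [i xi|nt]; last first.
    move: cx; rewrite /cnt big1 // => i _; by rewrite nt.
  pose s := tperm i z.
  pose x1 := fun a => x (s a).
  pose x0 := fun a => if a == z then ((x1 z).1, false) else x1 a.
  have dx1 : dist x1 by apply: dist_comp dx (@perm_inj _ s).
  have dx0 : dist x0.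
    rewrite /dist; have -> : (fun a => (x0 a).1) = (fun a => (x1 a).1).
      by apply: functional_extensionality => a; rewrite /x0; case: eqP => [->|].
    exact: dx1.
  have x1z : (x1 z).2 = true by rewrite /x1 /s tpermR.
  have c0 : cnt x0 = j.
    have := cnt_upd x1 z false; rewrite x1z cnt_perm cx addn0 addn1.
    by case.
  have Rx0 : R j x0 by apply: IH => //; apply: ltnW.
  have := R2 j j.+1 x0 z true (erefl _) dx0.
  move=> /(_ (conj _ (conj (erefl _) (conj hj (erefl _)))) Rx0).
  rewrite /x0 eqxx /= => /(_ (erefl _)) H.
  have H1 : R j.+1 x1.
    move: H; congr R; apply: functional_extensionality => a.
    case: eqP => [->|//]; by rewrite -x1z -surjective_pairing.
  have := R0 _ _ s dx1 H1; congr R; apply: functional_extensionality => a.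
  by rewrite /x1 tpermK.
apply: (R4 K (fun i => (val i, true))).
- by move=> a b /= /val_inj.
- by [].
- move=> e ie; apply: claim => //.
    by move=> a b /= /val_inj /(incr_inj ie).
  by rewrite /cnt sum1_card card_ord.
Qed.

Theorem theorem1 :
  (forall (S : system) (E : errspec S) (k k' : nat),
      0 < k -> k < k' -> solvable E k -> solvable E k') /\
  (forall k k' : nat, 0 < k -> k < k' ->
      exists (S : system) (E : errspec S), solvable E k' /\ ~ solvable E k).
Proof.
split.
  by move=> S E k k' h0 hk; apply: part1 => //; apply: ltnW.
move=> k k' h0 hk; exists (sysK k), (errK k); split; last exact: neg_solv.
by apply: (part1 (k := k.+1)) => //; apply: pos_solv.
Qed.
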